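(* Let $N_0,N_1\ge 0$ with $N_0+N_1=N$. The square matrix $M=M(N_0,N_1)$, with rows and columns indexed by the words of length $N$ having $N_0$ zeros and $N_1$ ones, with entry $M_{w,w'}=q^{g(w,w')}$ if $w'$ is feasible for $w$ and $M_{w,w'}=0$ otherwise ($q$ an indeterminate), is invertible.
   Context: A link pattern on a finite totally ordered set is a partition into pairs that are pairwise noncrossing (no $i<j<k<\ell$ with $\{i,k\}$ and $\{j,\ell\}$ both pairs). An extended link pattern $\pi$ on $\{1,\dots,N\}$ consists of integers $\ell_1<\dots<\ell_a$ (left points) and $r_1<\dots<r_b\le N$ (right points), with every left point smaller than every right point, together with a link pattern on each maximal interval of integers of $\{1,\dots,N\}$ containing no left or right point. Its word $\mathbf w(\pi)\in\{0,1\}^N$ has $w_{\ell_k}=1$, $w_{r_k}=0$, and for each pair $\{i<j\}$ of the link patterns $w_i=0$, $w_j=1$; $\mathbf w$ is a bijection onto $\{0,1\}^N$. A directed extended link pattern is an extended link pattern in which, in each pair of the link patterns, one element is declared the source and the other the sink; left points are sinks and right points are sources. $RL$ of it is the number of pairs whose larger element is the source. Its source-sink word $w$ has $w_i=0$ iff $i$ is a source. A word $w'$ is feasible for $w$ if there exists a directed extended link pattern whose underlying extended link pattern is $\mathbf w^{-1}(w')$ and whose source-sink word is $w$; this directed pattern is then unique and $g(w,w')$ is its $RL$. *)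

(* Defs.v *)
From HB Require Import structures.
From mathcomp Require Import all_boot all_order all_algebra.
Set Implicit Arguments. Unset Strict Implicit. Unset Printing Implicit Defensive.
Import Order.TTheory GRing.Theory Num.Theory.

(* Positions {1,...,N} are represented by 'I_N = {0,...,N-1} (same order).
   Letters: 0 = false, 1 = true.  Words of length N: {ffun 'I_N -> bool}. *)

(* An extended link pattern: left points L, right points R, and the set P of
   pairs (i, j) with i < j of the link patterns. *)
Definition is_elp (N : nat) (L R : {set 'I_N}) (P : {set 'I_N * 'I_N}) : bool :=
  [&& [disjoint L & R],
      [forall l in L, forall r in R, l < r],
      [forall p in P, p.1 < p.2],
      [forall x, (x \in L :|: R) == ~~ [exists p in P, (p.1 == x) || (p.2 == x)]],
      [forall p in P, forall p' in P, (p != p') ==>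
          [&& p.1 != p'.1, p.1 != p'.2, p.2 != p'.1 & p.2 != p'.2]],
      [forall p in P, forall p' in P,
          ~~ [&& p.1 < p'.1, p'.1 < p.2 & p.2 < p'.2]] &
      [forall p in P, forall x in L :|: R, ~~ ((p.1 < x) && (x < p.2))]].

Definition elp_word (N : nat) (L R : {set 'I_N}) (P : {set 'I_N * 'I_N})
    (x : 'I_N) : bool :=
  if x \in L then true
  else if x \in R then false
  else [exists p in P, p.2 == x].

(* A directed extended link pattern (L, R, P, S): S is the set of pairs whose
   larger element is the source (the others have their smaller element as
   source).  Left points are sinks, right points are sources. *)
Definition delp (N : nat) :=
  ({set 'I_N} * {set 'I_N} * {set 'I_N * 'I_N} * {set 'I_N * 'I_N})%type.

Definition is_delp (N : nat) (d : delp N) : bool :=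
  is_elp d.1.1.1 d.1.1.2 d.1.2 && (d.2 \subset d.1.2).

Definition RL (N : nat) (d : delp N) : nat := #|d.2|.

(* source-sink word: letter 0 (false) iff source *)
Definition ss_word (N : nat) (d : delp N) (x : 'I_N) : bool :=
  if x \in d.1.1.1 then true
  else if x \in d.1.1.2 then false
  else [exists p in d.1.2, ((p.2 == x) && (p \notin d.2))
                           || ((p.1 == x) && (p \in d.2))].

(* d witnesses feasibility of w' for w: its underlying extended link pattern
   is w^{-1}(w') (i.e. has word w') and its source-sink word is w. *)
Definition feasible_for (N : nat) (w w' : {ffun 'I_N -> bool}) (d : delp N) : bool :=
  [&& is_delp d,
      [forall x, elp_word d.1.1.1 d.1.1.2 d.1.2 x == w' x] &
      [forall x, ss_word d x == w x]].

Definition feasible (N : nat) (w w' : {ffun 'I_N -> bool}) : bool :=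
  [exists d, feasible_for w w' d].

Definition Mentry (N : nat) (w w' : {ffun 'I_N -> bool}) : {poly int} :=
  match [pick d | feasible_for w w' d] with
  | Some d => 'X ^+ RL d
  | None => 0
  end.

Definition words (N0 N1 : nat) :=
  {w : {ffun 'I_(N0 + N1) -> bool} |
     (#|[set x | ~~ w x]| == N0) && (#|[set x | w x]| == N1)}.

Definition Mmat (N0 N1 : nat) : 'M[{poly int}]_#|{: words N0 N1}| :=
  \matrix_(i, j) Mentry (val (enum_val i)) (val (enum_val j)).

(* Main.v *)
Require Import Defs.
From HB Require Import structures.
From mathcomp Require Import all_boot all_order all_algebra.
From mathcomp Require Import zify.
Set Implicit Arguments. Unset Strict Implicit. Unset Printing Implicit Defensive.
From mathcomp Require Import fingroup perm.
Import Order.TTheory GRing.Theory Num.Theory.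

Section Construct.
Variable N : nat.
Variable w : {ffun 'I_N -> bool}.

Definition wn (i : nat) : bool := [exists x : 'I_N, (val x == i) && w x].
Lemma wnE (x : 'I_N) : wn x = w x.
Proof.
apply/existsP/idP => [[y /andP[/eqP/val_inj -> //]]|wx].
by exists x; rewrite eqxx.
Qed.

Definition ht (k : nat) : int := (\sum_(0 <= i < k) (if wn i then -1 else 1))%R.
Lemma htS k : ht k.+1 = (ht k + (if wn k then -1 else 1))%R.
Proof. by rewrite /ht big_nat_recr. Qed.
Lemma htS2 k : ht k.+1 = (ht k + 1)%R \/ ht k.+1 = (ht k - 1)%R.
Proof. rewrite htS; case: (wn k); [right|left]; done. Qed.

Definition Pset : {set 'I_N * 'I_N} :=
  [set p : 'I_N * 'I_N | (p.1 < p.2) && (ht p.2.+1 == ht p.1) &&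
     [forall k : 'I_N, (p.1 < k <= p.2) ==> (ht p.1 < ht k)%R]].
Definition Lset : {set 'I_N} :=
  [set x : 'I_N | [forall k : 'I_N, (k <= x) ==> (ht x.+1 < ht k)%R]].
Definition Rset : {set 'I_N} :=
  [set x : 'I_N | [forall k : 'I_N.+1, (x < k) ==> (ht x < ht k)%R]].

Lemma inP (p : 'I_N * 'I_N) : reflect (p.1 < p.2 /\ ht p.2.+1 = ht p.1 /\
   forall k, p.1 < k <= p.2 -> (ht p.1 < ht k)%R) (p \in Pset).
Proof.
rewrite inE; apply: (iffP idP).
- move=> /andP[/andP[lt /eqP e] /forallP H]; split=>//; split=>// k /andP[a b].
  have kN : k < N by apply: leq_ltn_trans b (ltn_ord _).
  by have := H (Ordinal kN); rewrite /= a b.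
- move=> [lt [e H]]; rewrite lt e eqxx /=; apply/forallP=> k; apply/implyP=> hk.
  exact: H.
Qed.

Lemma inL (x : 'I_N) : reflect (forall k, k <= x -> (ht x.+1 < ht k)%R) (x \in Lset).
Proof.
rewrite inE; apply: (iffP forallP) => H k.
- move=> kx; have kN : k < N by apply: leq_ltn_trans kx (ltn_ord _).
  by have := H (Ordinal kN); rewrite /= kx.
- by apply/implyP => hk; apply: H.
Qed.

Lemma inR (x : 'I_N) : reflect (forall k, x < k <= N -> (ht x < ht k)%R) (x \in Rset).
Proof.
rewrite inE; apply: (iffP forallP) => H k.
- move=> /andP[a b]; have kN : k < N.+1 by [].
  by have := H (Ordinal kN); rewrite /= a.
- apply/implyP => hk; apply: H; by rewrite hk /= -ltnS ltn_ord.
Qed.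

Lemma p1_eq (p q : 'I_N * 'I_N) : p \in Pset -> q \in Pset -> p.1 = q.1 -> p = q.
Proof.
move: p q => [a b] [c d] /inP /= [l1 [e1 H1]] /inP /= [l2 [e2 H2]] E; subst c.
congr pair; apply/val_inj/eqP; rewrite eqn_leq; apply/andP; split; rewrite leqNgt;
apply/negP => lt.
- have := H1 d.+1; rewrite (leq_trans l2) //= => /(_ lt); lia.
- have := H2 b.+1; rewrite (leq_trans l1) //= => /(_ lt); lia.
Qed.

Lemma p2_eq (p q : 'I_N * 'I_N) : p \in Pset -> q \in Pset -> p.2 = q.2 -> p = q.
Proof.
move: p q => [a b] [c d] /inP /= [l1 [e1 H1]] /inP /= [l2 [e2 H2]] E; subst d.
congr pair; apply/val_inj/eqP; rewrite eqn_leq; apply/andP; split; rewrite leqNgt;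
apply/negP => lt.
- have := H2 a; rewrite lt (ltnW l1) /= => /(_ isT); lia.
- have := H1 c; rewrite lt (ltnW l2) /= => /(_ isT); lia.
Qed.

Lemma p12_neq (p q : 'I_N * 'I_N) : p \in Pset -> q \in Pset -> p.1 != q.2.
Proof.
move: p q => [a b] [c d] /inP /= [l1 [e1 H1]] /inP /= [l2 [e2 H2]].
apply/negP => /eqP E; subst d.
have := H1 a.+1; rewrite ltnSn l1 => /(_ isT).
have := H2 a; rewrite l2 leqnn => /(_ isT). lia.
Qed.


Lemma coverR (x : 'I_N) : x \notin Rset -> ht x.+1 = (ht x + 1)%R ->
  exists2 p, p \in Pset & p.1 = x.
Proof.
move=> nR hx.
have ex : exists k, (x < k <= N) && (ht k <= ht x)%R.
  move: nR; rewrite inE negb_forall => /existsP [k]; rewrite negb_imply ltNge negbK.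
  move=> /andP[xk hk]; exists k; by rewrite xk hk -ltnS ltn_ord.
case: (ex_minnP ex) => m /andP[/andP[xm mN] hm] mmin.
case: m xm mN hm mmin => [//|j] xm mN hm mmin.
have jx : x < j.
  rewrite ltn_neqAle -ltnS xm andbT; apply/eqP => E; subst j; move: hm; rewrite hx; lia.
have jN : j < N by [].
exists (x, Ordinal jN) => //; apply/inP => /=.
have hk : forall k, x < k <= j -> (ht x < ht k)%R.
  move=> k /andP[a b]; rewrite ltNge; apply/negP => hk.
  have := mmin k; rewrite a hk (leq_trans b) ?(ltnW jN) //= => /(_ isT); lia.
split=> //; split=> //.
have := hk j; rewrite jx leqnn => /(_ isT).
have := htS2 j; lia.
Qed.

Lemma coverL (x : 'I_N) : x \notin Lset -> ht x.+1 = (ht x - 1)%R ->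
  exists2 p, p \in Pset & p.2 = x.
Proof.
move=> nL hx.
have ex : exists k, (k <= x) && (ht k <= ht x.+1)%R.
  move: nL; rewrite inE negb_forall => /existsP [k]; rewrite negb_imply ltNge negbK.
  move=> /andP[xk hk]; exists k; by rewrite xk hk.
have ub : forall i, (i <= x) && (ht i <= ht x.+1)%R -> i <= x by move=> i /andP[].
case: (ex_maxnP ex ub) => m /andP[mx hm] mmax.
have mlx : m < x.
  rewrite ltn_neqAle mx andbT; apply/eqP => E; subst m; move: hm; rewrite hx; lia.
have mN : m < N by apply: ltn_trans mlx (ltn_ord _).
exists (Ordinal mN, x) => //; apply/inP => /=.
have hk : forall k, m < k <= x -> (ht x.+1 < ht k)%R.
  move=> k /andP[a b]; rewrite ltNge; apply/negP => hk.
  have := mmax k; rewrite b hk /= => /(_ isT); lia.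
have e : ht x.+1 = ht m.
  have := hk m.+1; rewrite ltnSn mlx => /(_ isT).
  have := htS2 m; move: hm; lia.
split=> //; split=> // k kk; rewrite -e; exact: hk.
Qed.

Lemma Pelp : is_elp Lset Rset Pset.
Proof.
apply/and5P; split; last (apply/and3P; split).
- apply/pred0P => x /=; apply/negP => /andP[/inL hL /inR hR].
  have := hL x (leqnn _); have := hR x.+1; rewrite ltnSn ltn_ord => /(_ isT); lia.
- apply/forall_inP => l /inL hl; apply/forall_inP => r /inR hr.
  rewrite ltnNge; apply/negP => rl.
  have := hl r rl; have := hr l.+1; rewrite ltnS rl ltn_ord => /(_ isT); lia.
- by apply/forall_inP => p /inP [].
- apply/forallP => x; apply/eqP; rewrite in_setU; apply/idP/idP.
  + move=> /orP[/inL hL|/inR hR]; apply/negP => /exists_inP [[a b] /inP /= [l [e H]]].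
    * move=> /orP[/eqP E|/eqP E]; subst x.
      - have := hL a (leqnn _); have := H a.+1; rewrite ltnSn l => /(_ isT); lia.
      - have := hL a (ltnW l); lia.
    * move=> /orP[/eqP E|/eqP E]; subst x.
      - have := hR b.+1; rewrite ltnS (ltnW l) ltn_ord => /(_ isT); lia.
      - have := hR b.+1; rewrite ltnSn ltn_ord => /(_ isT).
        have := H b; rewrite l leqnn => /(_ isT); lia.
  + move=> /negP H; rewrite -[_ || _]negbK negb_or; apply/negP => /andP[nL nR].
    apply: H; case: (htS2 x) => hx.
    * case: (coverR nR hx) => p hp e; apply/exists_inP; exists p => //; by rewrite e eqxx.
    * case: (coverL nL hx) => p hp e; apply/exists_inP; exists p => //; by rewrite e eqxx orbT.
- apply/forall_inP => p hp; apply/forall_inP => q hq; apply/implyP => ne.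
  apply/and4P; split; apply/eqP => E.
  + by move/eqP: ne; apply; apply: p1_eq.
  + by move/eqP: (p12_neq hp hq).
  + by move/eqP: (p12_neq hq hp); rewrite E.
  + by move/eqP: ne; apply; apply: p2_eq.
- apply/forall_inP => [[a b]] /inP /= [l [e H]]; apply/forall_inP => [[c d]] /inP /= [l' [e' H']].
  apply/and3P => [[x1 x2 x3]].
  have := H c; rewrite x1 (ltnW x2) => /(_ isT).
  have := H' b.+1; rewrite ltnS (ltnW x2) x3 => /(_ isT); lia.
- apply/forall_inP => [[a b]] /inP /= [l [e H]]; apply/forall_inP => x.
  rewrite in_setU => /orP[/inL hL|/inR hR]; apply/andP => [[x1 x2]].
  + have := hL a (ltnW x1); have := H x.+1; rewrite ltnS (ltnW x1) x2 => /(_ isT); lia.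
  + have := hR b.+1; rewrite ltnS (ltnW x2) ltn_ord => /(_ isT).
    have := H x; rewrite x1 (ltnW x2) => /(_ isT); lia.
Qed.


Lemma htw (x : 'I_N) : ht x.+1 = (ht x + (if w x then -1 else 1))%R.
Proof. by rewrite htS wnE. Qed.

Lemma word_ok (x : 'I_N) : elp_word Lset Rset Pset x = w x.
Proof.
have hw := htw x.
rewrite /elp_word; case: ifP => hL.
  move/inL: hL => /(_ x (leqnn _)); move: hw; case: (w x) => //; lia.
case: ifP => hR.
  move/inR: hR => /(_ x.+1); rewrite ltnSn ltn_ord => /(_ isT); move: hw; case: (w x) => //; lia.
apply/idP/idP.
- move=> /exists_inP [[a b] /inP /= [l [e H]] /eqP E]; subst b.
  have := H x; rewrite l leqnn => /(_ isT); move: hw; case: (w x) => //; lia.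
- move=> wx; rewrite wx in hw.
  case: (coverL (negbT hL) hw) => p hp e; apply/exists_inP; exists p => //; by rewrite e.
Qed.

Definition dw : delp N := (Lset, Rset, Pset, set0).

Lemma dw_feasible : feasible_for w w dw.
Proof.
apply/and3P; split.
- by rewrite /is_delp Pelp sub0set.
- apply/forallP => x; by rewrite word_ok.
- apply/forallP => x; rewrite -word_ok /ss_word /elp_word /=.
  case: ifP => // _; case: ifP => // _.
  apply/eqP; apply: eq_existsb => p; rewrite in_set0 /=; case: (p \in _) => //=; by rewrite andbT andbF orbF.
Qed.

End Construct.

Section Feas.
Variable N : nat.

Definition Fw (v : {ffun 'I_N -> bool}) : nat := \sum_x v x * x.

Lemma feas_cases (w w' : {ffun 'I_N -> bool}) (d : delp N) :
  feasible_for w w' d -> (d.2 = set0 /\ w = w') \/ Fw w < Fw w'.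
Proof.
case: d => [[[L R] P] S].
move=> /and3P[/andP[He Hsub] /forallP Hw' /forallP Hw] /=.
rewrite /= in Hsub.
move: He => /and5P[_ _ /forall_inP Hlt /forallP H4 /and3P[/forall_inP Hd _ _]].
have eq1 : forall p q, p \in P -> q \in P -> p.1 = q.1 -> p = q.
  move=> p q hp hq e; apply/eqP; apply/negP => /negP ne.
  by have := implyP (forall_inP (Hd p hp) q hq) ne => /and4P[/eqP []].
have eq2 : forall p q, p \in P -> q \in P -> p.2 = q.2 -> p = q.
  move=> p q hp hq e; apply/eqP; apply/negP => /negP ne.
  by have := implyP (forall_inP (Hd p hp) q hq) ne => /and4P[_ _ _ /eqP []].
have n12 : forall p q, p \in P -> q \in P -> p.1 <> q.2.
  move=> p q hp hq e; case: (eqVneq p q) => [E|ne].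
    by subst q; have := Hlt p hp; rewrite e ltnn.
  by have := implyP (forall_inP (Hd p hp) q hq) ne => /and4P[_ /eqP []].
set E1 := [set p.1 | p in S]; set E2 := [set p.2 | p in S].
have pw : forall x, (w x : nat) + (x \in E2) = w' x + (x \in E1).
  move=> x; move: (H4 x) (Hw x) (Hw' x); rewrite /ss_word /elp_word /=.
  case: (boolP [exists p in P, (p.1 == x) || (p.2 == x)]) => [ex|nex].
  - rewrite /= in_setU => /eqP hLR.
    have /norP[nL nR] : ~~ ((x \in L) || (x \in R)) by rewrite hLR.
    rewrite (negbTE nL) (negbTE nR) => /eqP <- /eqP <-.
    move/exists_inP: ex => [p hp /orP[/eqP e|/eqP e]]; subst x.
    + have -> : [exists p0 in P, p0.2 == p.1] = false.
        apply/negbTE/negP => /exists_inP [q hq /eqP e]; exact: (n12 p q hp hq (esym e)).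
      have -> : (p.1 \in E2) = false.
        apply/negbTE/negP => /imsetP [q hq e]; exact: (n12 p q hp (subsetP Hsub q hq) e).
      have -> : (p.1 \in E1) = (p \in S).
        apply/imsetP/idP => [[q hq e]|hpS]; last by exists p.
        by rewrite (eq1 p q hp (subsetP Hsub q hq) e).
      have -> : [exists p0 in P, (p0.2 == p.1) && (p0 \notin S) || (p0.1 == p.1) && (p0 \in S)] = (p \in S).
        apply/exists_inP/idP => [[q hq /orP[/andP[/eqP e _]|/andP[/eqP e hqS]]]|hpS].
        * by case: (n12 p q hp hq (esym e)).
        * by rewrite (eq1 p q hp hq (esym e)).
        * by exists p => //; rewrite eqxx hpS orbT.
      by rewrite addn0 add0n.
    + have -> : [exists p0 in P, p0.2 == p.2] = true.
        by apply/exists_inP; exists p.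
      have -> : (p.2 \in E1) = false.
        apply/negbTE/negP => /imsetP [q hq e]; exact: (n12 q p (subsetP Hsub q hq) hp (esym e)).
      have -> : (p.2 \in E2) = (p \in S).
        apply/imsetP/idP => [[q hq e]|hpS]; last by exists p.
        by rewrite (eq2 p q hp (subsetP Hsub q hq) e).
      have -> : [exists p0 in P, (p0.2 == p.2) && (p0 \notin S) || (p0.1 == p.2) && (p0 \in S)] = (p \notin S).
        apply/exists_inP/idP => [[q hq /orP[/andP[/eqP e hqS]|/andP[/eqP e _]]]|hpS].
        * by rewrite (eq2 p q hp hq (esym e)).
        * by case: (n12 q p hq hp e).
        * by exists p => //; rewrite eqxx hpS.
      by case: (p \in S).
  - have -> : (x \in E1) = false.
      apply/negbTE/negP => /imsetP [q hq e]; move/negP: nex; apply; apply/exists_inP.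
      by exists q; [apply: (subsetP Hsub) | rewrite e eqxx].
    have -> : (x \in E2) = false.
      apply/negbTE/negP => /imsetP [q hq e]; move/negP: nex; apply; apply/exists_inP.
      by exists q; [apply: (subsetP Hsub) | rewrite e eqxx orbT].
    rewrite !addn0 /= in_setU => /eqP hLR; move: (hLR).
    case: (x \in L) => /=; first by move=> _ /eqP <- /eqP <-.
    case: (x \in R) => //=; by move=> _ /eqP <- /eqP <-.
case: (set_0Vmem S) => [S0|[p0 hp0]].
  left; split => //; apply/ffunP => x; have := pw x.
  rewrite /E1 /E2 S0 !imset0 !in_set0 !addn0.
  by case: (w x); case: (w' x) => // /eqP.
right.
have sumE : forall (E : {set 'I_N}), \sum_x (x \in E) * (x : nat) = \sum_(x in E) (x : nat).
  move=> E; rewrite [RHS]big_mkcond /=; apply: eq_bigr => x _; by case: (x \in E); rewrite ?mul1n ?mul0n.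
have inj1 : {in S &, injective (fun p : 'I_N * 'I_N => p.1)}.
  move=> p q hp hq e; apply: eq1 e; exact: (subsetP Hsub).
have inj2 : {in S &, injective (fun p : 'I_N * 'I_N => p.2)}.
  move=> p q hp hq e; apply: eq2 e; exact: (subsetP Hsub).
have key : Fw w + \sum_(p in S) (p.2 : nat) = Fw w' + \sum_(p in S) (p.1 : nat).
  rewrite -(big_imset (fun x : 'I_N => x : nat) inj1) -(big_imset (fun x : 'I_N => x : nat) inj2).
  rewrite -!sumE /Fw -!big_split /=; apply: eq_bigr => x _.
  by rewrite -!mulnDl pw.
have lt : \sum_(p in S) (p.1 : nat) < \sum_(p in S) (p.2 : nat).
  rewrite (bigD1 p0) //= [X in _ < X](bigD1 p0) //=.
  have h1 := Hlt p0 (subsetP Hsub p0 hp0).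
  have h2 : \sum_(i in S | i != p0) (i.1 : nat) <= \sum_(i in S | i != p0) (i.2 : nat).
    apply: leq_sum => i /andP[hi _]; exact: ltnW (Hlt i (subsetP Hsub i hi)).
  by rewrite -addSn leq_add.
lia.
Qed.

End Feas.

Lemma det_unitri (R : comNzRingType) n (A : 'M[R]_n) (G : 'I_n -> nat) :
  (forall i, A i i = 1%R) -> (forall i j, A i j != 0%R -> i = j \/ G i < G j) ->
  (\det A = 1)%R.
Proof.
move=> Hd Ho.
rewrite /determinant (bigD1 (1%g : 'S_n)) //= odd_perm1 expr0 mul1r.
rewrite [X in (X + _)%R]big1; last by move=> i _; rewrite perm1 Hd.
rewrite big1 ?addr0 //.
move=> s ns.
case: (pickP (fun i => A i (s i) == 0%R)) => [i /eqP Hi | Hall].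
  by rewrite (bigD1 i) //= Hi mul0r mulr0.
exfalso.
have H : forall i, i = s i \/ G i < G (s i) by move=> i; apply: Ho; rewrite Hall.
have le : forall i, G i <= G (s i).
  by move=> i; case: (H i) => [<-|/ltnW].
have eqs : \sum_i G (s i) = \sum_i G i.
  by rewrite [RHS](reindex_inj (@perm_inj _ s)).
case: (pickP (fun i => s i != i)) => [i ni | Hid]; last first.
  move/eqP: ns; apply; apply/permP => i; rewrite perm1; exact/eqP/negbFE/Hid.
have lt : G i < G (s i) by case: (H i) => // e; rewrite -e eqxx in ni.
have : \sum_i G i < \sum_i G (s i).
  rewrite (bigD1 i) //= [X in _ < X](bigD1 i) //= -addSn leq_add //.
  by apply: leq_sum => j _; apply: le.
by rewrite eqs ltnn.
Qed.

Lemma Mentry_diag N (w : {ffun 'I_N -> bool}) : Mentry w w = 1%R.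
Proof.
rewrite /Mentry; case: pickP => [d Hd|Hn].
  case: (feas_cases Hd) => [[e _]|]; last by rewrite ltnn.
  by rewrite /RL e cards0 expr0.
by have := Hn (dw w); rewrite dw_feasible.
Qed.

Lemma Mentry_off N (w w' : {ffun 'I_N -> bool}) :
  Mentry w w' != 0%R -> w = w' \/ Fw w < Fw w'.
Proof.
rewrite /Mentry; case: pickP => [d Hd _|_]; last by rewrite eqxx.
by case: (feas_cases Hd) => [[_ e]|h]; [left|right].
Qed.

Theorem proposition2p8 (N0 N1 : nat) : Mmat N0 N1 \in unitmx.
Proof.
rewrite unitmxE (@det_unitri _ _ _ (fun i => Fw (val (enum_val i)))) ?unitr1 //.
- move=> i; rewrite mxE; exact: Mentry_diag.
- move=> i j; rewrite mxE => /Mentry_off [e|h]; [left | by right].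
  by apply: enum_val_inj; apply: val_inj.
Qed.
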